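(* Let $k \ge 3$ be an integer and $\varepsilon \in (0, 1/12]$. Then \[ d(k,\varepsilon) \ \ge\ \frac{\log\big(r_k(\lfloor \tfrac{1}{12\varepsilon}\rfloor)\big)}{\log\big(12\lfloor \tfrac{1}{12\varepsilon}\rfloor\big)}. \]
   Context: A $k$-term arithmetic progression ($k$AP) is a set $P=\{x, x+\lambda, \dots, x+(k-1)\lambda\}\subset\mathbb{R}$ with $\lambda>0$, called the gap length of $P$. For $N\in\mathbb{N}$, $r_k(N)$ denotes the maximal cardinality of a subset $A\subseteq\{1,\dots,N\}$ that contains no $k$AP. Given $\varepsilon\in(0,1)$, a set $E\subset\mathbb{R}$ is said to $\varepsilon$-avoid $k$APs if for every $k$AP $P$ with gap length $\lambda$ one has $\sup_{p\in P}\inf_{x\in E}|x-p|\ \ge\ \varepsilon\lambda$. Define $d(k,\varepsilon)=\sup\{\dim_H(E): E\subset\mathbb{R} \text{ bounded and } E \ \varepsilon\text{-avoids } k\text{APs}\}$, where $\dim_H$ is Hausdorff dimension. *)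

(* Defs.v *)
From Stdlib Require Import Reals Lra Lia List ZArith.
Import ListNotations.
Open Scope R_scope.

(* E eps-avoids kAPs iff for every kAP P with gap lam,
     sup_{p in P} inf_{e in E} |e - p| >= eps*lam.
   Since P is finite, the sup is a max, and inf_{e in E}|e-p| >= c iff every
   e in E has |e-p| >= c (with inf over the empty set = +oo). *)
Definition eps_avoids_kAPs (k : nat) (eps : R) (E : R -> Prop) : Prop :=
  forall x lam : R, 0 < lam ->
    exists i : nat, (i < k)%nat /\
      forall e : R, E e -> eps * lam <= Rabs (e - (x + INR i * lam)).

Definition bounded_set (E : R -> Prop) : Prop :=
  exists M : R, forall x, E x -> Rabs x <= M.

Definition rpow (t s : R) : R := if Req_EM_T t 0 then 0 else Rpower t s.

Definition diam_le (U : R -> Prop) (r : R) : Prop :=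
  forall x y, U x -> U y -> Rabs (x - y) <= r.

(* H^s_delta(E) = 0 : for every eta > 0 there is a countable cover (U_n) of E
   with diam U_n <= delta and sum_n (diam U_n)^s <= eta.  (Covers are recorded
   together with numbers r_n >= diam U_n; taking r_n = diam U_n shows the
   infimum is unchanged.) *)
Definition Hs_delta_null (s delta : R) (E : R -> Prop) : Prop :=
  forall eta : R, 0 < eta ->
    exists (U : nat -> R -> Prop) (r : nat -> R),
      (forall n, 0 <= r n <= delta) /\
      (forall n, diam_le (U n) (r n)) /\
      (forall x, E x -> exists n, U n x) /\
      (forall N, sum_f_R0 (fun n => rpow (r n) s) N <= eta).

(* H^s(E) = lim_{delta -> 0} H^s_delta(E) = sup_delta H^s_delta(E) = 0. *)
Definition Hausdorff_null (s : R) (E : R -> Prop) : Prop :=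
  forall delta : R, 0 < delta -> Hs_delta_null s delta E.

Definition is_dimH (E : R -> Prop) (d : R) : Prop :=
  (forall s, 0 < s -> Hausdorff_null s E -> d <= s) /\
  (forall d', (forall s, 0 < s -> Hausdorff_null s E -> d' <= s) -> d' <= d).

Definition is_d (k : nat) (eps : R) (D : R) : Prop :=
  is_lub (fun t => exists E : R -> Prop,
            bounded_set E /\ eps_avoids_kAPs k eps E /\ is_dimH E t) D.

(* A subset A of naturals contains a kAP.  For k >= 2 a kAP whose points are
   integers has integer gap, so it suffices to use x, lam natural, lam >= 1. *)
Definition contains_kAP (k : nat) (A : nat -> Prop) : Prop :=
  exists x lam : nat, (0 < lam)%nat /\
    forall i : nat, (i < k)%nat -> A (x + i * lam)%nat.

Definition kAP_free_subset (k N : nat) (A : list nat) : Prop :=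
  NoDup A /\ (forall a, In a A -> (1 <= a <= N)%nat) /\
  ~ contains_kAP k (fun a => In a A).

Definition is_rk (k N m : nat) : Prop :=
  (exists A, kAP_free_subset k N A /\ length A = m) /\
  (forall A, kAP_free_subset k N A -> (length A <= m)%nat).

Definition floor_nat (x : R) : nat := Z.to_nat (Int_part x).

(* Main.v *)
Require Import Defs.
From Stdlib Require Import Reals Lra Lia List ClassicalEpsilon Classical Arith ZArith.
From Coquelicot Require Import Coquelicot.
Import ListNotations.
Open Scope R_scope.


Definition digit (a : nat) : R := 12 * INR a - 6.
Definition term (b : R) (c : nat -> nat) (j : nat) : R := digit (c j) * (/b)^(S j).
Definition val (b : R) (c : nat -> nat) : R := Series (term b c).
Definition Aseq (A : list nat) (c : nat -> nat) : Prop := forall i, In (c i) A.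
Definition Agood (b : R) (A : list nat) : Prop :=
  12 <= b /\ forall a, In a A -> (1 <= a)%nat /\ 12 * INR a <= b.

Lemma digit_bounds b A a : Agood b A -> In a A -> 0 <= digit a <= b - 1.
Proof.
  intros [Hb HA] Ha. destruct (HA a Ha) as [H1 H2].
  apply le_INR in H1. simpl in H1. unfold digit. lra.
Qed.

Lemma term_bound b A c j : Agood b A -> Aseq A c ->
  0 <= term b c j <= (/b)^j * ((b-1)/b).
Proof.
  intros Hg Hc. destruct (digit_bounds b A (c j) Hg (Hc j)) as [H1 H2].
  assert (Hb : 12 <= b) by apply Hg.
  assert (Hp : 0 < (/b)^j) by (apply pow_lt; apply Rinv_0_lt_compat; lra).
  unfold term. simpl. split.
  - apply Rmult_le_pos; [lra|]. apply Rmult_le_pos; [|lra].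
    left; apply Rinv_0_lt_compat; lra.
  - replace ((/b)^j * ((b-1)/b)) with ((b-1) * (/b * (/b)^j)) by (field; lra).
    apply Rmult_le_compat_r; [|lra].
    apply Rmult_le_pos; [left; apply Rinv_0_lt_compat; lra| lra].
Qed.

Lemma geom_bound_ex b : 12 <= b -> ex_series (fun j => (/b)^j * ((b-1)/b)).
Proof.
  intros Hb. apply ex_series_scal_r. apply ex_series_geom.
  rewrite Rabs_pos_eq. apply (Rmult_lt_reg_l b); [lra|]. rewrite Rinv_r; lra.
  left; apply Rinv_0_lt_compat; lra.
Qed.

Lemma geom_bound_val b : 12 <= b -> Series (fun j => (/b)^j * ((b-1)/b)) = 1.
Proof.
  intros Hb. rewrite Series_scal_r. rewrite Series_geom.
  field. split; lra.
  rewrite Rabs_pos_eq. apply (Rmult_lt_reg_l b); [lra|]. rewrite Rinv_r; lra.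
  left; apply Rinv_0_lt_compat; lra.
Qed.

Lemma ex_val b A c : Agood b A -> Aseq A c -> ex_series (term b c).
Proof.
  intros Hg Hc. assert (Hb : 12 <= b) by apply Hg.
  apply (@ex_series_le R_AbsRing R_CompleteNormedModule _ (fun j => (/b)^j * ((b-1)/b))).
  - intros n. destruct (term_bound b A c n Hg Hc).
    change (norm (term b c n)) with (Rabs (term b c n)).
    rewrite Rabs_pos_eq; lra.
  - apply geom_bound_ex; auto.
Qed.

Lemma val_bounds b A c : Agood b A -> Aseq A c -> 0 <= val b c <= 1.
Proof.
  intros Hg Hc. assert (Hb : 12 <= b) by apply Hg. unfold val. split.
  - replace 0 with (Series (fun n => 0 * term b c n)).
    apply Series_le. intros n. destruct (term_bound b A c n Hg Hc). lra.
    apply ex_val with A; auto.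
    rewrite Series_scal_l. ring.
  - rewrite <- (geom_bound_val b Hb). apply Series_le.
    intros n. apply term_bound with A; auto. apply geom_bound_ex; auto.
Qed.

Lemma val_shift b A c : Agood b A -> Aseq A c ->
  b * val b c = digit (c 0%nat) + val b (fun i => c (S i)).
Proof.
  intros Hg Hc. assert (Hb : 12 <= b) by apply Hg. unfold val.
  rewrite Series_incr_1 by (apply ex_val with A; auto).
  rewrite (Series_ext (fun k => term b c (S k)) (fun k => /b * term b (fun i => c (S i)) k)).
  rewrite Series_scal_l. unfold term at 1. simpl. field. lra.
  intros n. unfold term. simpl. ring.
Qed.


Definition Eset (b : R) (A : list nat) (x : R) : Prop := exists c, Aseq A c /\ x = val b c.

Lemma E_bounds b A x : Agood b A -> Eset b A x -> 0 <= x <= 1.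
Proof. intros Hg [c [Hc ->]]. apply val_bounds with A; auto. Qed.

Lemma E_dec b A x : Agood b A -> Eset b A x ->
  exists a e', In a A /\ Eset b A e' /\ 0 <= e' <= 1 /\ b * x = digit a + e'.
Proof.
  intros Hg [c [Hc ->]]. exists (c 0%nat), (val b (fun i => c (S i))).
  assert (Hc' : Aseq A (fun i => c (S i))) by (intro i; apply Hc).
  repeat split.
  - apply Hc.
  - exists (fun i => c (S i)); split; auto.
  - apply (val_bounds b A _ Hg Hc').
  - apply (val_bounds b A _ Hg Hc').
  - apply val_shift with A; auto.
Qed.

Definition Near (b : R) (A : list nat) (k : nat) (x lam : R) : Prop :=
  forall i, (i < k)%nat -> exists e, Eset b A e /\ Rabs (e - (x + INR i * lam)) < lam / b.

Lemma nat_eq_of_close p q : Rabs (12 * (INR p - INR q)) < 12 -> p = q.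
Proof.
  intros H. destruct (lt_eq_lt_dec p q) as [[Hl|He]|Hl]; auto.
  - apply (le_INR (S _)) in Hl. rewrite S_INR in Hl. exfalso.
    rewrite Rabs_left in H; [lra|]. assert (INR p < INR q) by lra. lra.
  - apply (le_INR (S _)) in Hl. rewrite S_INR in Hl. exfalso.
    rewrite Rabs_right in H; lra.
Qed.

Lemma nat_2diff p q r : Rabs (12 * (INR p - 2 * INR q + INR r)) < 6 -> (p + r = 2 * q)%nat.
Proof.
  intros H. assert (E1 : INR p - 2 * INR q + INR r = INR (p + r) - INR (2 * q)).
  { rewrite plus_INR, mult_INR. simpl. ring. }
  rewrite E1 in H.
  destruct (lt_eq_lt_dec (p + r) (2 * q)) as [[Hl|He]|Hl]; auto.
  - apply (le_INR (S _)) in Hl. rewrite S_INR in Hl. exfalso.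
    rewrite Rabs_left in H; lra.
  - apply (le_INR (S _)) in Hl. rewrite S_INR in Hl. exfalso.
    rewrite Rabs_right in H; lra.
Qed.

Lemma near_mul b e p lam : 0 < b -> Rabs (e - p) < lam / b -> Rabs (b * e - b * p) < lam.
Proof.
  intros Hb H. replace (b * e - b * p) with (b * (e - p)) by ring.
  rewrite Rabs_mult, Rabs_pos_eq by lra.
  apply (Rmult_lt_compat_l b) in H; [|lra].
  replace (b * (lam / b)) with lam in H by (field; lra). lra.
Qed.

Lemma base_case b A k x lam : Agood b A -> (3 <= k)%nat ->
  ~ contains_kAP k (fun a => In a A) -> 0 < lam -> 11 < lam * (b + 2) ->
  Near b A k x lam -> False.
Proof.
  intros Hg Hk HA Hl H11 HN. assert (Hb : 12 <= b) by apply Hg.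
  destruct (Rlt_or_le lam 1) as [Hl1|Hl1].
  -
    assert (Hch : forall i, exists a : nat, (i < k)%nat -> In a A /\
              4 < 12 * INR a - b * (x + INR i * lam) < 7).
    { intros i. destruct (lt_dec i k) as [Hi|Hi].
      - destruct (HN i Hi) as [e [He Hd]].
        destruct (E_dec b A e Hg He) as [a [e' [Ha [He' [Hb' Hbe]]]]].
        exists a. intros _. split; auto.
        apply near_mul in Hd; [|lra]. rewrite Hbe in Hd. unfold digit in Hd.
        apply Rabs_def2 in Hd. lra.
      - exists 0%nat. intros; lia. }
    set (af := fun i => proj1_sig (constructive_indefinite_description _ (Hch i))).
    assert (Haf : forall i, (i < k)%nat -> In (af i) A /\
              4 < 12 * INR (af i) - b * (x + INR i * lam) < 7).
    { intros i Hi. unfold af. destruct (constructive_indefinite_description _ (Hch i)); simpl; auto. }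
    assert (H2d : forall i, (S (S i) < k)%nat -> (af (S (S i)) + af i = 2 * af (S i))%nat).
    { intros i Hi. apply nat_2diff.
      destruct (Haf i ltac:(lia)) as [_ H0]. destruct (Haf (S i) ltac:(lia)) as [_ H1].
      destruct (Haf (S (S i)) ltac:(lia)) as [_ H2].
      rewrite !S_INR in H1. rewrite !S_INR in H2. apply Rabs_def1; lra. }
    assert (H01 : (af 0 < af 1)%nat).
    { destruct (Haf 0%nat ltac:(lia)) as [_ H0]. destruct (Haf 1%nat ltac:(lia)) as [_ H1].
      simpl in H0, H1. destruct (le_lt_dec (af 1%nat) (af 0%nat)) as [Hle|]; auto.
      apply le_INR in Hle. exfalso. nra. }
    set (g := (af 1 - af 0)%nat).
    assert (Hs : forall i, (S i < k)%nat -> af (S i) = (af i + g)%nat).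
    { induction i as [|i IH]; intros Hi.
      - unfold g; lia.
      - specialize (IH ltac:(lia)). specialize (H2d i Hi). lia. }
    assert (Hall : forall i, (i < k)%nat -> af i = (af 0 + i * g)%nat).
    { induction i as [|i IH]; intros Hi.
      - lia.
      - rewrite (Hs i Hi). rewrite (IH ltac:(lia)). lia. }
    apply HA. exists (af 0%nat), g. split; [unfold g; lia|].
    intros i Hi. rewrite <- (Hall i Hi). apply Haf; auto.
  - destruct (HN 0%nat ltac:(lia)) as [e0 [He0 Hd0]].
    destruct (HN 2%nat ltac:(lia)) as [e2 [He2 Hd2]].
    apply E_bounds in He0; auto. apply E_bounds in He2; auto.
    simpl in Hd0, Hd2.
    assert (lam / b <= lam / 12).
    { unfold Rdiv. apply Rmult_le_compat_l; [lra|]. apply Rinv_le_contravar; lra. }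
    apply Rabs_def2 in Hd0. apply Rabs_def2 in Hd2. lra.
Qed.

Lemma step_case b A k x lam : Agood b A -> (1 <= k)%nat -> 0 < lam ->
  lam * (b + 2) <= 11 -> Near b A k x lam ->
  exists x', Near b A k x' (b * lam).
Proof.
  intros Hg Hk Hl H11 HN. assert (Hb : 12 <= b) by apply Hg.
  assert (Hch : forall i, exists pr : nat * R, (i < k)%nat -> In (fst pr) A /\
     Eset b A (snd pr) /\ 0 <= snd pr <= 1 /\
     Rabs (digit (fst pr) + snd pr - b * (x + INR i * lam)) < lam).
  { intros i. destruct (lt_dec i k) as [Hi|Hi].
    - destruct (HN i Hi) as [e [He Hd]].
      destruct (E_dec b A e Hg He) as [a [e' [Ha [He' [Hb' Hbe]]]]].
      exists (a, e'). intros _. simpl. repeat split; auto; try lra.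
      apply near_mul in Hd; [|lra]. rewrite Hbe in Hd. exact Hd.
    - exists (0%nat, 0). intros; lia. }
  set (pf := fun i => proj1_sig (constructive_indefinite_description _ (Hch i))).
  assert (Hpf : forall i, (i < k)%nat -> In (fst (pf i)) A /\
     Eset b A (snd (pf i)) /\ 0 <= snd (pf i) <= 1 /\
     Rabs (digit (fst (pf i)) + snd (pf i) - b * (x + INR i * lam)) < lam).
  { intros i Hi. unfold pf. destruct (constructive_indefinite_description _ (Hch i)); simpl; auto. }
  assert (Hs : forall i, (S i < k)%nat -> fst (pf (S i)) = fst (pf i)).
  { intros i Hi. apply nat_eq_of_close.
    destruct (Hpf i ltac:(lia)) as [_ [_ [B0 D0]]].
    destruct (Hpf (S i) ltac:(lia)) as [_ [_ [B1 D1]]].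
    rewrite S_INR in D1. unfold digit in D0, D1.
    apply Rabs_def2 in D0. apply Rabs_def2 in D1. apply Rabs_def1; nra. }
  assert (Hall : forall i, (i < k)%nat -> fst (pf i) = fst (pf 0%nat)).
  { induction i as [|i IH]; intros Hi; auto. rewrite Hs by auto. apply IH; lia. }
  exists (b * x - digit (fst (pf 0%nat))). intros i Hi.
  destruct (Hpf i Hi) as [_ [HE [_ Hd]]].
  exists (snd (pf i)). split; auto.
  replace (b * lam / b) with lam by (field; lra).
  rewrite Hall in Hd by auto.
  replace (snd (pf i) - (b * x - digit (fst (pf 0%nat)) + INR i * (b * lam)))
    with (digit (fst (pf 0%nat)) + snd (pf i) - b * (x + INR i * lam)) by ring.
  exact Hd.
Qed.

Lemma avoid_n b A k : Agood b A -> (3 <= k)%nat ->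
  ~ contains_kAP k (fun a => In a A) ->
  forall n x lam, 0 < lam -> 11 < lam * (b + 2) * b ^ n -> Near b A k x lam -> False.
Proof.
  intros Hg Hk HA. assert (Hb : 12 <= b) by apply Hg.
  induction n as [|n IH]; intros x lam Hl H11 HN.
  - simpl in H11. apply (base_case b A k x lam); auto; lra.
  - destruct (Rlt_or_le 11 (lam * (b + 2))) as [H|H].
    + apply (base_case b A k x lam); auto.
    + destruct (step_case b A k x lam Hg ltac:(lia) Hl H HN) as [x' HN'].
      apply (IH x' (b * lam)); auto.
      * apply Rmult_lt_0_compat; lra.
      * simpl in H11. lra.
Qed.

Lemma inv_lt1 b : 12 <= b -> Rabs (/b) < 1.
Proof. intros Hb. rewrite Rabs_pos_eq by (left; apply Rinv_0_lt_compat; lra).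
  apply (Rmult_lt_reg_l b); [lra|]. rewrite Rinv_r; lra. Qed.

Lemma avoids b A k eps : Agood b A -> (3 <= k)%nat ->
  ~ contains_kAP k (fun a => In a A) -> 0 < eps -> eps * b <= 1 ->
  eps_avoids_kAPs k eps (Eset b A).
Proof.
  intros Hg Hk HA He Heb. assert (Hb : 12 <= b) by apply Hg.
  intros x lam Hl. apply NNPP. intros Hn.
  assert (HN : Near b A k x lam).
  { intros i Hi. apply NNPP. intros Hne. apply Hn. exists i. split; auto.
    intros e HE. apply Rnot_lt_le. intros Hlt. apply Hne. exists e. split; auto.
    assert (eps * lam <= lam / b).
    { apply (Rmult_le_reg_l b); [lra|]. replace (b * (lam / b)) with lam by (field; lra).
      nra. }
    lra. }
  destruct (pow_lt_1_zero (/b) (inv_lt1 b Hb)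
     (lam * (b + 2) / 11) ltac:(apply Rdiv_lt_0_compat; nra)) as [n Hn'].
  specialize (Hn' n (Nat.le_refl n)).
  rewrite Rabs_pos_eq in Hn' by (apply pow_le; left; apply Rinv_0_lt_compat; lra).
  apply (avoid_n b A k Hg Hk HA n x lam Hl); auto.
  assert (Hp : (/b)^n * b^n = 1).
  { rewrite <- Rpow_mult_distr, Rinv_l, pow1; lra. }
  assert (0 < b ^ n) by (apply pow_lt; lra).
  apply (Rmult_lt_compat_r (b^n)) in Hn'; auto.
  rewrite Hp in Hn'. unfold Rdiv in Hn'.
  replace (lam * (b + 2) * / 11 * b ^ n) with ((lam * (b + 2) * b ^ n) / 11) in Hn' by (field).
  lra.
Qed.


Definition prefix (w : list nat) (c : nat -> nat) : Prop :=
  forall i, (i < length w)%nat -> nth i w 0%nat = c i.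

Fixpoint lsum (f : list nat -> R) (F : list (list nat)) : R :=
  match F with [] => 0 | w :: F' => f w + lsum f F' end.

Definition hd_is (a : nat) (w : list nat) : bool :=
  match w with a' :: _ => Nat.eqb a' a | [] => false end.

Fixpoint asum (g : nat -> R) (L : list nat) : R :=
  match L with [] => 0 | a :: L' => g a + asum g L' end.

Lemma lsum_nonneg f F : (forall w, 0 <= f w) -> 0 <= lsum f F.
Proof. intros H; induction F; simpl; [lra|]. specialize (H a); lra. Qed.

Lemma lsum_in f F w : (forall w, 0 <= f w) -> In w F -> f w <= lsum f F.
Proof.
  intros H; induction F as [|w' F IH]; simpl; [tauto|]. intros [->|Hi].
  - pose proof (lsum_nonneg f F H); lra.
  - specialize (IH Hi). specialize (H w'); lra.
Qed.

Lemma lsum_app f F G : lsum f (F ++ G) = lsum f F + lsum f G.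
Proof. induction F; simpl; [ring|]. rewrite IHF; ring. Qed.

Lemma lsum_filter f p F :
  lsum f F = lsum f (filter p F) + lsum f (filter (fun w => negb (p w)) F).
Proof.
  induction F as [|w F IH]; simpl; [ring|].
  destruct (p w); simpl; rewrite IH; ring.
Qed.

Lemma filter_hd_neg a a0 F : a <> a0 ->
  filter (hd_is a) (filter (fun w => negb (hd_is a0 w)) F) = filter (hd_is a) F.
Proof.
  intros Hne. induction F as [|w F IH]; simpl; auto.
  destruct w as [|x w']; simpl; auto.
  destruct (Nat.eqb x a0) eqn:E0; simpl.
  - apply Nat.eqb_eq in E0. subst x.
    destruct (Nat.eqb a0 a) eqn:E1; [apply Nat.eqb_eq in E1; congruence|]. auto.
  - destruct (Nat.eqb x a); rewrite IH; auto.
Qed.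

Lemma asum_ext_in g h L : (forall a, In a L -> g a = h a) -> asum g L = asum h L.
Proof.
  induction L as [|a L IH]; simpl; intros H; auto.
  rewrite H by auto. rewrite IH; auto.
Qed.

Lemma asum_le g h L : (forall a, In a L -> g a <= h a) -> asum g L <= asum h L.
Proof.
  induction L as [|a L IH]; simpl; intros H; [lra|].
  assert (asum g L <= asum h L) by (apply IH; auto). specialize (H a (or_introl eq_refl)). lra.
Qed.

Lemma asum_const c L : asum (fun _ => c) L = INR (length L) * c.
Proof. induction L; [simpl; ring|]. simpl length. simpl asum. rewrite IHL, S_INR; ring. Qed.

Lemma key_ineq f (A0 : list nat) : NoDup A0 -> (forall w, 0 <= f w) ->
  forall F, asum (fun a => lsum f (filter (hd_is a) F)) A0 <= lsum f F.
Proof.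
  intros HD Hf. induction HD as [|a0 A' Hn HD IH]; intros F; simpl.
  - apply lsum_nonneg; auto.
  - rewrite (asum_ext_in _ (fun a => lsum f (filter (hd_is a) (filter (fun w => negb (hd_is a0 w)) F)))).
    + specialize (IH (filter (fun w => negb (hd_is a0 w)) F)).
      rewrite (lsum_filter f (hd_is a0) F). lra.
    + intros a Ha. rewrite filter_hd_neg; auto. intro; subst; tauto.
Qed.

Lemma lsum_tl f q F : (forall w a, f (a :: w) = q * f w) -> (forall w, In w F -> w <> []) ->
  lsum f F = q * lsum f (map (@tl nat) F).
Proof.
  intros Hf. induction F as [|w F IH]; simpl; intros H; [ring|].
  destruct w as [|a w']; [exfalso; apply (H []); auto|].
  rewrite Hf. rewrite IH by auto. simpl. ring.
Qed.

Lemma mass (A : list nat) : NoDup A -> A <> [] ->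
  forall L F, (forall w, In w F -> (length w <= L)%nat) ->
  (forall c, Aseq A c -> exists w, In w F /\ prefix w c) ->
  1 <= lsum (fun w => (/ INR (length A)) ^ (length w)) F.
Proof.
  intros HD HA. set (mr := INR (length A)).
  assert (Hmr : 1 <= mr).
  { unfold mr. destruct A as [|a A']; [congruence|]. simpl length. rewrite S_INR.
    pose proof (pos_INR (length A')); lra. }
  set (f := fun w : list nat => (/ mr) ^ (length w)).
  assert (Hf : forall w, 0 <= f w).
  { intros w. unfold f. apply pow_le. left; apply Rinv_0_lt_compat; lra. }
  induction L as [|L IH]; intros F HL HC.
  - destruct A as [|a A']; [congruence|].
    destruct (HC (fun _ => a)) as [w [Hw _]]. { intro i; simpl; auto. }
    specialize (HL w Hw). destruct w; [|simpl in HL; lia].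
    change 1 with (f []). apply lsum_in; auto.
  - destruct (in_dec (list_eq_dec Nat.eq_dec) [] F) as [Hin|Hnin].
    { change 1 with (f []). apply lsum_in; auto. }
    assert (Ha : forall a, In a A ->
               / mr <= lsum f (filter (hd_is a) F)).
    { intros a Ha.
      rewrite (lsum_tl f (/ mr)).
      - rewrite <- (Rmult_1_r (/mr)) at 1. apply Rmult_le_compat_l.
        + left; apply Rinv_0_lt_compat; lra.
        + apply IH.
          * intros w' Hw'. apply in_map_iff in Hw'. destruct Hw' as [w [<- Hw]].
            apply filter_In in Hw. destruct Hw as [Hw _]. specialize (HL w Hw).
            destruct w; simpl in *; lia.
          * intros c Hc.
            destruct (HC (fun i => match i with 0%nat => a | S j => c j end)) as [w [Hw Hp]].
            { intros [|i]; auto. }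
            destruct w as [|a' w']; [tauto|].
            assert (a' = a) by (apply (Hp 0%nat); simpl; lia). subst a'.
            exists w'. split.
            -- apply in_map_iff. exists (a :: w'). split; auto.
               apply filter_In. split; auto. simpl. apply Nat.eqb_refl.
            -- intros i Hi. apply (Hp (S i)). simpl; lia.
      - intros w a'. unfold f. simpl. ring.
      - intros w Hw ->. apply filter_In in Hw. destruct Hw; tauto. }
    apply Rle_trans with (asum (fun a => lsum f (filter (hd_is a) F)) A).
    + apply Rle_trans with (asum (fun _ => / mr) A).
      * rewrite asum_const. fold mr. rewrite Rinv_r; lra.
      * apply asum_le; auto.
    + apply key_ineq; auto.
Qed.

Lemma koenig (A : list nat) (w : nat -> list nat) :
  (forall c, Aseq A c -> exists n, prefix (w n) c) ->
  exists N, forall c, Aseq A c -> exists n, (n <= N)%nat /\ prefix (w n) c.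
Proof.
  intros Hcov. apply NNPP. intros Hn.
  set (T := fun v : list nat => forall N, exists c, Aseq A c /\ prefix v c /\
              forall n, (n <= N)%nat -> ~ prefix (w n) c).
  assert (T0 : T []).
  { intros N. apply NNPP. intros H. apply Hn. exists N. intros c Hc.
    apply NNPP. intros H'. apply H. exists c. split; auto. split.
    - intros i Hi; simpl in Hi; lia.
    - intros n Hn' Hp. apply H'. exists n; auto. }
  assert (Text : forall v, T v -> exists a, In a A /\ T (v ++ [a])).
  { intros v Tv. apply NNPP. intros H.
    assert (Hb : forall a, In a A -> exists Na, ~ (exists c, Aseq A c /\ prefix (v ++ [a]) c /\
              forall n, (n <= Na)%nat -> ~ prefix (w n) c)).
    { intros a Ha. apply NNPP. intros H2. apply H. exists a. split; auto.
      intros N. apply NNPP. intros H3. apply H2. exists N. auto. }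
    assert (HM : forall L : list nat, (forall a, In a L -> In a A) ->
              exists M, forall a, In a L -> exists Na, (Na <= M)%nat /\
              ~ (exists c, Aseq A c /\ prefix (v ++ [a]) c /\
                  forall n, (n <= Na)%nat -> ~ prefix (w n) c)).
    { induction L as [|a L IHL]; intros HL.
      - exists 0%nat. intros a []. 
      - destruct IHL as [M HM]. { intros; apply HL; simpl; auto. }
        destruct (Hb a (HL a (or_introl eq_refl))) as [Na HNa].
        exists (Nat.max M Na). intros a' [<-|Ha'].
        + exists Na. split; [lia|auto].
        + destruct (HM a' Ha') as [Nb [HNb1 HNb2]]. exists Nb. split; [lia|auto]. }
    destruct (HM A (fun a h => h)) as [M HMM].
    destruct (Tv M) as [c [Hc [Hpv Hnc]]].
    set (a := c (length v)).
    destruct (HMM a (Hc _)) as [Na [HNa HNb]].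
    apply HNb. exists c. split; auto. split.
    - intros i Hi. rewrite length_app in Hi. simpl in Hi.
      destruct (lt_dec i (length v)).
      + rewrite app_nth1 by auto. apply Hpv; auto.
      + rewrite app_nth2 by lia. assert (i = length v) by lia. subst i.
        rewrite Nat.sub_diag. simpl. reflexivity.
    - intros n Hn'. apply Hnc. lia. }
  assert (Hst : forall v, exists a, T v -> In a A /\ T (v ++ [a])).
  { intros v. destruct (classic (T v)) as [Tv|Tv].
    - destruct (Text v Tv) as [a Ha]. exists a; auto.
    - exists 0%nat. tauto. }
  set (step := fun v => proj1_sig (constructive_indefinite_description _ (Hst v))).
  assert (Hstep : forall v, T v -> In (step v) A /\ T (v ++ [step v])).
  { intros v. unfold step. destruct (constructive_indefinite_description _ (Hst v)); simpl; auto. }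
  set (vs := fix vs (i : nat) : list nat := match i with 0%nat => [] | S i => vs i ++ [step (vs i)] end).
  set (c := fun i => step (vs i)).
  assert (Hvs : forall i, T (vs i) /\ length (vs i) = i /\ forall j, (j < i)%nat -> nth j (vs i) 0%nat = c j).
  { induction i as [|i [IT [IL IN]]].
    - simpl. split; auto. split; auto. intros; lia.
    - simpl. split; [apply Hstep; auto|]. split.
      + rewrite length_app, IL. simpl. lia.
      + intros j Hj. destruct (lt_dec j i).
        * rewrite app_nth1 by lia. apply IN; auto.
        * assert (j = i) by lia. subst j. rewrite app_nth2 by lia. rewrite IL, Nat.sub_diag.
          reflexivity. }
  assert (Hc : Aseq A c). { intros i. unfold c. apply Hstep. apply Hvs. }
  destruct (Hcov c Hc) as [n Hpn].
  destruct (Hvs (length (w n))) as [TL [LL NL]].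
  destruct (TL n) as [c' [Hc' [Hp' Hnc']]].
  apply (Hnc' n (Nat.le_refl n)). intros i Hi.
  rewrite <- (Hp' i) by (rewrite LL; auto). rewrite NL by auto. apply Hpn; auto.
Qed.


Lemma sep b A : Agood b A -> forall j c c', Aseq A c -> Aseq A c' ->
  ~ (forall i, (i < j)%nat -> c i = c' i) -> (/b)^j < Rabs (val b c - val b c').
Proof.
  intros Hg. assert (Hb : 12 <= b) by apply Hg.
  assert (Hib : 0 < /b) by (apply Rinv_0_lt_compat; lra).
  induction j as [|j IH]; intros c c' Hc Hc' Hn.
  - exfalso; apply Hn; intros; lia.
  - pose proof (val_shift b A c Hg Hc) as S1. pose proof (val_shift b A c' Hg Hc') as S2.
    assert (Ht : Aseq A (fun i => c (S i))) by (intro; apply Hc).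
    assert (Ht' : Aseq A (fun i => c' (S i))) by (intro; apply Hc').
    pose proof (val_bounds b A _ Hg Ht) as VB1. pose proof (val_bounds b A _ Hg Ht') as VB2.
    assert (Hpj : (/b)^j <= 1) by (rewrite <- (pow1 j); apply pow_incr; split; [lra|]; left; apply (Rmult_lt_reg_l b); [lra|]; rewrite Rinv_r; lra).
    assert (Hbd : Rabs (b * val b c - b * val b c') = b * Rabs (val b c - val b c')).
    { rewrite <- Rmult_minus_distr_l, Rabs_mult, Rabs_pos_eq by lra. auto. }
    simpl.
    destruct (Nat.eq_dec (c 0%nat) (c' 0%nat)) as [He|Hne].
    + assert (Hn2 : ~ (forall i, (i < j)%nat -> c (S i) = c' (S i))).
      { intros H. apply Hn. intros [|i] Hi; auto. apply H; lia. }
      specialize (IH _ _ Ht Ht' Hn2).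
      rewrite S1, S2, He in Hbd.
      replace (digit (c' 0%nat) + val b (fun i => c (S i)) - (digit (c' 0%nat) + val b (fun i => c' (S i))))
        with (val b (fun i => c (S i)) - val b (fun i => c' (S i))) in Hbd by ring.
      apply (Rmult_lt_reg_l b); [lra|]. rewrite <- Hbd.
      rewrite <- Rmult_assoc, Rinv_r, Rmult_1_l by lra. auto.
    + assert (H12 : 12 <= Rabs (12 * (INR (c 0%nat) - INR (c' 0%nat)))).
      { apply Rnot_lt_le. intros H. apply Hne. apply nat_eq_of_close; auto. }
      rewrite S1, S2 in Hbd. unfold digit in Hbd.
      assert (11 <= b * Rabs (val b c - val b c')).
      { rewrite <- Hbd.
        replace (12 * INR (c 0%nat) - 6 + val b (fun i => c (S i)) - (12 * INR (c' 0%nat) - 6 + val b (fun i => c' (S i))))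
          with (12 * (INR (c 0%nat) - INR (c' 0%nat)) + (val b (fun i => c (S i)) - val b (fun i => c' (S i)))) by ring.
        pose proof (Rabs_triang_inv (12 * (INR (c 0%nat) - INR (c' 0%nat))) (- (val b (fun i => c (S i)) - val b (fun i => c' (S i))))) as H1.
        rewrite Rabs_Ropp in H1.
        replace (12 * (INR (c 0%nat) - INR (c' 0%nat)) - - (val b (fun i => c (S i)) - val b (fun i => c' (S i))))
          with (12 * (INR (c 0%nat) - INR (c' 0%nat)) + (val b (fun i => c (S i)) - val b (fun i => c' (S i)))) in H1 by ring.
        assert (Rabs (val b (fun i => c (S i)) - val b (fun i => c' (S i))) <= 1) by (apply Rabs_le; lra).
        lra. }
      apply (Rmult_lt_reg_l b); [lra|].
      rewrite <- Rmult_assoc, Rinv_r, Rmult_1_l by lra. lra.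
Qed.

Lemma bracket b r : 12 <= b -> 0 < r <= 1 -> exists j, (/b)^(S j) < r <= (/b)^j.
Proof.
  intros Hb Hr. destruct (pow_lt_1_zero (/b) (inv_lt1 b Hb) r ltac:(lra)) as [J HJ].
  specialize (HJ J (Nat.le_refl J)).
  rewrite Rabs_pos_eq in HJ by (apply pow_le; left; apply Rinv_0_lt_compat; lra).
  clear - HJ Hr. induction J as [|J IH].
  - simpl in HJ. lra.
  - destruct (Rlt_or_le ((/b)^J) r) as [H|H].
    + apply IH; auto.
    + exists J. split; auto.
Qed.

Lemma Jexists b mr s r n : 12 <= b -> 2 <= mr -> 0 < s -> s < ln mr / ln b -> 0 <= r <= 1 ->
  exists j, r <= (/b)^j /\ (/mr)^j <= mr * rpow r s + (/2)^(S (S n)).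
Proof.
  intros Hb Hm Hs Hst Hr.
  assert (Hlb : 0 < ln b) by (rewrite <- ln_1; apply ln_increasing; lra).
  assert (Hlm : 0 < ln mr) by (rewrite <- ln_1; apply ln_increasing; lra).
  destruct (Req_dec r 0) as [->|Hr0].
  - exists (S (S n)). split. { apply pow_le; left; apply Rinv_0_lt_compat; lra. }
    unfold rpow. destruct (Req_EM_T 0 0); [|congruence].
    assert ((/mr)^(S (S n)) <= (/2)^(S (S n))).
    { apply pow_incr. split; [left; apply Rinv_0_lt_compat; lra|]. apply Rinv_le_contravar; lra. }
    lra.
  - destruct (bracket b r Hb ltac:(lra)) as [j [Hj1 Hj2]].
    exists j. split; auto.
    assert (Hpos : 0 <= (/2)^(S (S n))) by (apply pow_le; lra).
    enough ((/mr)^j <= mr * rpow r s) by lra.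
    unfold rpow. destruct (Req_EM_T r 0); [lra|]. unfold Rpower.
    rewrite <- (exp_ln mr) at 2 by lra. rewrite <- exp_plus.
    rewrite <- (exp_ln ((/mr)^j)) by (apply pow_lt; apply Rinv_0_lt_compat; lra).
    rewrite ln_pow, ln_Rinv by (try apply Rinv_0_lt_compat; lra).
    assert (Hlr : ln ((/b)^(S j)) < ln r).
    { apply ln_increasing; auto. apply pow_lt; apply Rinv_0_lt_compat; lra. }
    rewrite ln_pow, ln_Rinv in Hlr by (try apply Rinv_0_lt_compat; lra).
    assert (Hlr1 : ln r <= 0).
    { destruct (Req_dec r 1) as [->|]; [rewrite ln_1; lra|]. left. rewrite <- ln_1. apply ln_increasing; lra. }
    set (tau := ln mr / ln b) in *.
    assert (Htau : tau * ln b = ln mr) by (unfold tau; field; lra).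
    rewrite S_INR in Hlr.
    assert (H1 : (s - tau) * ln r >= 0) by nra.
    assert (H2 : tau * ln r > tau * ((INR j + 1) * - ln b)) by (apply Rmult_gt_compat_l; [lra|]; lra).
    left. apply exp_increasing.
    assert (tau * ((INR j + 1) * - ln b) = - (INR j + 1) * ln mr) by (rewrite <- Htau; ring).
    nra.
Qed.


Lemma lsum_seq f g N : lsum f (map g (seq 0 (S N))) = sum_f_R0 (fun n => f (g n)) N.
Proof.
  induction N as [|N IH].
  - simpl. ring.
  - rewrite seq_S, map_app, lsum_app, IH. simpl. ring.
Qed.

Lemma geo N : sum_f_R0 (fun n => (/2)^(S (S n))) N = /2 - (/2)^(S (S N)).
Proof. induction N as [|N IH]; simpl; [field|]. simpl in IH. rewrite IH. field. Qed.

Lemma exists_maxlen (F : list (list nat)) : exists L, forall w, In w F -> (length w <= L)%nat.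
Proof.
  induction F as [|w F [L HL]].
  - exists 0%nat. intros w [].
  - exists (Nat.max L (length w)). intros w' [<-|Hw]; [lia|]. specialize (HL w' Hw). lia.
Qed.

Lemma dim_lower b A s : Agood b A -> NoDup A -> 0 < s -> Hausdorff_null s (Eset b A) ->
  ln (INR (length A)) / ln b <= s.
Proof.
  intros Hg HD Hs Hnull. assert (Hb : 12 <= b) by apply Hg.
  apply Rnot_lt_le. intros Hst.
  assert (Hlb : 0 < ln b) by (rewrite <- ln_1; apply ln_increasing; lra).
  set (mr := INR (length A)) in *.
  assert (Hm2 : (2 <= length A)%nat).
  { destruct (length A) as [|[|m']] eqn:HL; try lia; exfalso.
    - unfold mr in Hst. simpl in Hst. unfold ln in Hst. destruct (Rlt_dec 0 0); [lra|].
      unfold Rdiv in Hst. rewrite Rmult_0_l in Hst. lra.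
    - unfold mr in Hst. simpl in Hst. rewrite ln_1 in Hst. unfold Rdiv in Hst. rewrite Rmult_0_l in Hst. lra. }
  assert (Hmr : 2 <= mr) by (unfold mr; apply le_INR in Hm2; simpl in Hm2; lra).
  assert (HAne : A <> []) by (intros ->; simpl in Hm2; lia).
  destruct (Hnull 1 Rlt_0_1 (/(4 * mr)) ltac:(apply Rinv_0_lt_compat; lra)) as [U [r [Hr [Hd [Hc Hsum]]]]].
  assert (Hch : forall n, exists w, (/mr)^(length w) <= mr * rpow (r n) s + (/2)^(S (S n)) /\
             forall c, Aseq A c -> U n (val b c) -> prefix w c).
  { intros n. destruct (Jexists b mr s (r n) n Hb Hmr Hs Hst (Hr n)) as [j [Hj1 Hj2]].
    destruct (classic (exists c0, Aseq A c0 /\ U n (val b c0))) as [[c0 [Hc0 HU0]]|Hno].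
    - exists (map c0 (seq 0 j)). rewrite length_map, length_seq. split; auto.
      intros c Hcc HU i Hi. rewrite length_map, length_seq in Hi.
      rewrite nth_indep with (d' := c0 0%nat) by (rewrite length_map, length_seq; auto).
      rewrite map_nth, seq_nth by auto. simpl.
      destruct (classic (forall i, (i < j)%nat -> c i = c0 i)) as [Hall|Hnot].
      + symmetry; auto.
      + exfalso. pose proof (sep b A Hg j c c0 Hcc Hc0 Hnot) as Hsep.
        specialize (Hd n (val b c) (val b c0) HU HU0). lra.
    - exists (repeat 0%nat j). rewrite repeat_length. split; auto.
      intros c Hcc HU. exfalso. apply Hno. exists c; auto. }
  set (wf := fun n => proj1_sig (constructive_indefinite_description _ (Hch n))).
  assert (Hwf : forall n, (/mr)^(length (wf n)) <= mr * rpow (r n) s + (/2)^(S (S n)) /\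
             forall c, Aseq A c -> U n (val b c) -> prefix (wf n) c).
  { intros n. unfold wf. destruct (constructive_indefinite_description _ (Hch n)); simpl; auto. }
  assert (Hcov : forall c, Aseq A c -> exists n, prefix (wf n) c).
  { intros c Hcc. destruct (Hc (val b c)) as [n Hn]. { exists c; auto. }
    exists n. apply Hwf; auto. }
  destruct (koenig A wf Hcov) as [N HN].
  set (F := map wf (seq 0 (S N))).
  destruct (exists_maxlen F) as [L HL].
  assert (Hm := mass A HD HAne L F HL).
  assert (H1 : 1 <= lsum (fun w => (/ mr) ^ length w) F).
  { apply Hm. intros c Hcc. destruct (HN c Hcc) as [n [Hn Hp]]. exists (wf n). split; auto.
    unfold F. apply in_map. apply in_seq. lia. }
  unfold F in H1. rewrite lsum_seq in H1.
  assert (H2 : sum_f_R0 (fun n => (/mr)^(length (wf n))) N <=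
               sum_f_R0 (fun n => rpow (r n) s * mr + (/2)^(S (S n))) N).
  { apply sum_Rle. intros n _. destruct (Hwf n) as [Hw _]. lra. }
  rewrite sum_plus, <- scal_sum, geo in H2.
  specialize (Hsum N).
  assert (mr * sum_f_R0 (fun n => rpow (r n) s) N <= mr * / (4 * mr)) by (apply Rmult_le_compat_l; lra).
  replace (mr * / (4 * mr)) with (/4) in H by (field; lra).
  assert (0 < (/2)^(S (S N))) by (apply pow_lt; lra).
  lra.
Qed.

Lemma cover_int M' y : 0 <= y <= INR (S M') -> exists n, (n <= M')%nat /\ INR n <= y <= INR n + 1.
Proof.
  induction M' as [|M' IH]; intros Hy.
  - exists 0%nat. simpl in *. split; [lia|lra].
  - destruct (Rle_or_lt y (INR (S M'))) as [H|H].
    + destruct (IH ltac:(lra)) as [n [Hn Hn']]. exists n. split; [lia|auto].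
    + exists (S M'). split; [lia|]. rewrite (S_INR (S M')) in Hy. lra.
Qed.

Lemma sum_ind_M M q N : sum_f_R0 (fun n => if lt_dec n M then q else 0) N = INR (Nat.min (S N) M) * q.
Proof.
  induction N as [|N IH].
  - simpl sum_f_R0. destruct (lt_dec 0 M).
    + destruct M as [|M]; [lia|]. simpl. ring.
    + assert (M = 0%nat) by lia. subst. simpl. ring.
  - simpl sum_f_R0. rewrite IH. destruct (lt_dec (S N) M).
    + rewrite Nat.min_l by lia. rewrite Nat.min_l by lia. rewrite (S_INR (S N)). ring.
    + rewrite (Nat.min_r (S (S N))) by lia. rewrite Nat.min_r by lia. ring.
Qed.

Lemma null2 (E : R -> Prop) : (forall x, E x -> 0 <= x <= 1) -> Hausdorff_null 2 E.
Proof.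
  intros HE delta Hdl eta Het.
  destruct (archimed_cor1 (Rmin delta eta) ltac:(apply Rmin_pos; lra)) as [M [HM HM0]].
  set (h := / INR M) in *.
  assert (Hh : 0 < h) by (apply Rinv_0_lt_compat; apply lt_0_INR; lia).
  assert (HhM : h * INR M = 1) by (unfold h; rewrite Rinv_l; auto; apply not_0_INR; lia).
  pose proof (Rmin_l delta eta). pose proof (Rmin_r delta eta).
  exists (fun n x => (n < M)%nat /\ INR n * h <= x <= (INR n + 1) * h).
  exists (fun n => if lt_dec n M then h else 0).
  split; [|split; [|split]].
  - intros n. destruct (lt_dec n M); lra.
  - intros n x y [Hn Hx] [_ Hy]. destruct (lt_dec n M); [|lia].
    apply Rabs_le. lra.
  - intros x Hx. specialize (HE x Hx). destruct M as [|M']; [lia|].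
    destruct (cover_int M' (x * INR (S M'))) as [n [Hn Hn']].
    { split; [apply Rmult_le_pos; [lra|apply pos_INR]|]. nra. }
    exists n. split; [lia|]. split.
    + destruct Hn' as [Ha _]. apply (Rmult_le_compat_r h) in Ha; [|lra].
      replace (x * INR (S M') * h) with (x * (h * INR (S M'))) in Ha by ring. rewrite HhM in Ha. lra.
    + destruct Hn' as [_ Ha]. apply (Rmult_le_compat_r h) in Ha; [|lra].
      replace (x * INR (S M') * h) with (x * (h * INR (S M'))) in Ha by ring. rewrite HhM in Ha. lra.
  - intros N.
    rewrite (sum_eq _ (fun n => if lt_dec n M then h ^ 2 else 0)).
    + rewrite sum_ind_M.
      assert (INR (Nat.min (S N) M) <= INR M) by (apply le_INR; lia).
      assert (INR M * h ^ 2 = h) by (simpl; rewrite Rmult_1_r, <- Rmult_assoc, (Rmult_comm (INR M)), HhM; ring).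
      assert (0 <= h ^ 2) by (apply pow_le; lra). nra.
    + intros i _. unfold rpow. destruct (lt_dec i M).
      * destruct (Req_EM_T h 0); [lra|]. replace 2 with (INR 2) by (simpl; ring).
        rewrite Rpower_pow; auto.
      * destruct (Req_EM_T 0 0); [auto|congruence].
Qed.


Theorem theorem1p1 (k : nat) (eps : R) (hk : (3 <= k)%nat)
  (heps : 0 < eps <= / 12)
  (m : nat) (hm : is_rk k (floor_nat (/ (12 * eps))) m)
  (D : R) (hD : is_d k eps D) :
  ln (INR m) / ln (12 * INR (floor_nat (/ (12 * eps)))) <= D.
Proof.
  set (Nn := floor_nat (/ (12 * eps))) in *.
  assert (Hx : 1 <= / (12 * eps)).
  { rewrite <- Rinv_1. apply Rinv_le_contravar; lra. }
  assert (HNn : (1 <= Nn)%nat /\ INR Nn <= / (12 * eps)).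
  { unfold Nn, floor_nat. destruct (base_Int_part (/ (12 * eps))) as [H1 H2].
    assert (Hz : (0 < Int_part (/ (12 * eps)))%Z) by (apply lt_IZR; lra).
    rewrite INR_IZR_INZ, Z2Nat.id by lia. split; [lia|auto]. }
  destruct HNn as [HN1 HN2].
  set (b := 12 * INR Nn).
  assert (Hb : 12 <= b) by (unfold b; apply le_INR in HN1; simpl in HN1; lra).
  assert (Heb : eps * b <= 1).
  { unfold b. apply (Rmult_le_compat_l (12 * eps)) in HN2; [|lra].
    rewrite Rinv_r in HN2 by lra. lra. }
  destruct hm as [[A [[HND [HAr HAk]] HlenA]] _].
  assert (Hg : Agood b A).
  { split; auto. intros a Ha. destruct (HAr a Ha) as [H1 H2]. split; auto.
    apply le_INR in H2. unfold b. lra. }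
  set (E := Eset b A).
  assert (Hav : eps_avoids_kAPs k eps E) by (apply avoids; auto; lra).
  assert (Hbd : bounded_set E).
  { exists 1. intros x Hx'. apply E_bounds in Hx'; auto. apply Rabs_le; lra. }
  set (T := fun y => 0 < - y /\ Hausdorff_null (- y) E).
  assert (HTb : bound T).
  { exists 0. intros y [Hy _]. lra. }
  assert (HTn : exists y, T y).
  { exists (Ropp 2). unfold T. rewrite Ropp_involutive. split; [lra|].
    apply null2. intros x Hx'. apply (E_bounds b A); auto. }
  destruct (completeness T HTb HTn) as [L [HL1 HL2]].
  assert (Hdim : is_dimH E (- L)).
  { split.
    - intros s Hs Hn. assert (T (- s)) by (unfold T; rewrite Ropp_involutive; auto).
      specialize (HL1 _ H). lra.
    - intros d' Hd'. assert (L <= - d').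
      { apply HL2. intros y [Hy Hny]. specialize (Hd' (- y) Hy Hny). lra. }
      lra. }
  assert (Htau : ln (INR m) / ln b <= - L).
  { apply (proj2 Hdim). intros s Hs Hn. rewrite <- HlenA. apply dim_lower; auto. }
  assert (- L <= D).
  { apply (proj1 hD). exists E. auto. }
  fold b. lra.
Qed.
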